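(* Let $\Omega=\Omega_0\cup\Omega_1$ be an at most unary topological signature and let $X$ be an arbitrary topological space. Then the Polish representation $\Phi_X:\overline{\Omega}_X\mathsf{Fin}_\Omega\to S_{\mathsf M}$ is an isomorphism of topological algebras.
   Context: $\Omega=\biguplus_n\Omega_n$ is a topological signature with $\Omega_n=\emptyset$ for $n\ge2$. A topological $\Omega$-algebra has continuous evaluation maps $\Omega_n\times A^n\to A$. $\mathsf{Fin}_\Omega$ is the class of finite discrete topological $\Omega$-algebras; $\overline{\Omega}_X\mathsf{Fin}_\Omega$ is the free profinite $\Omega$-algebra over the space $X$: a profinite $\Omega$-algebra with a continuous map $\iota:X\to\overline{\Omega}_X\mathsf{Fin}_\Omega$ whose image generates a dense subalgebra, such that every continuous map from $X$ into a member of $\mathsf{Fin}_\Omega$ extends uniquely through $\iota$ to a continuous homomorphism. Let $X\cup\Omega$ be the topological disjoint union of $X$ and the spaces $\Omega_n$, and $\overline{\Omega}_{X\cup\Omega}\mathsf M$ the free profinite monoid over this space (a profinite monoid with continuous map $\eta$ from $X\cup\Omega$ whose image generates a dense submonoid, universal for continuous maps into finite discrete monoids). It is an $\Omega$-algebra via $E_n(w,u_1,\dots,u_n)=\eta(w)u_1\cdots u_n$, and $S_{\mathsf M}$ is the closed $\Omega$-subalgebra generated by $\eta(X)$. The Polish representation $\Phi_X$ is the unique continuous $\Omega$-homomorphism $\overline{\Omega}_X\mathsf{Fin}_\Omega\to S_{\mathsf M}$ with $\Phi_X\circ\iota=\eta|_X$. *)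

(* Defs.v *)
From HB Require Import structures.
From mathcomp Require Import all_boot all_order all_algebra.
From mathcomp Require Import all_classical all_reals all_analysis.
Set Implicit Arguments. Unset Strict Implicit. Unset Printing Implicit Defensive.
Local Open Scope classical_set_scope.

(* MathComp + MathComp-Analysis (topologicalType).
   An at most unary topological signature Omega = Omega_0 u Omega_1 is given
   by two topological spaces O0 (constants) and O1 (unary symbols). *)

Definition top_alg (O0 O1 A : topologicalType)
  (c : O0 -> A) (u : O1 -> A -> A) : Prop :=
  continuous c /\ continuous (fun p : O1 * A => u p.1 p.2).

Definition discrete_top (T : topologicalType) : Prop := forall U : set T, open U.

Definition fin_alg (O0 O1 B : topologicalType)
  (c : O0 -> B) (u : O1 -> B -> B) : Prop :=
  finite_set [set: B] /\ discrete_top B /\ top_alg c u.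

Definition alg_hom (O0 O1 A B : Type)
  (cA : O0 -> A) (uA : O1 -> A -> A) (cB : O0 -> B) (uB : O1 -> B -> B)
  (f : A -> B) : Prop :=
  (forall w, f (cA w) = cB w) /\ (forall w a, f (uA w a) = uB w (f a)).

Definition alg_closed (O0 O1 A : Type) (c : O0 -> A) (u : O1 -> A -> A)
  (S : set A) : Prop :=
  (forall w, S (c w)) /\ (forall w a, S a -> S (u w a)).

Definition alg_gen (O0 O1 A : Type) (c : O0 -> A) (u : O1 -> A -> A)
  (G : set A) : set A :=
  fun a => forall S : set A, G `<=` S -> alg_closed c u S -> S a.

Definition closed_alg_gen (O0 O1 A : topologicalType) (c : O0 -> A)
  (u : O1 -> A -> A) (G : set A) : set A :=
  fun a => forall S : set A, G `<=` S -> alg_closed c u S -> closed S -> S a.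

(* profinite Omega-algebra: compact, and continuous homomorphisms into
   finite discrete Omega-algebras separate points (equivalently, an inverse
   limit of finite discrete Omega-algebras) *)
Definition profinite_alg (O0 O1 A : topologicalType)
  (c : O0 -> A) (u : O1 -> A -> A) : Prop :=
  top_alg c u /\ compact [set: A] /\
  forall a b : A, a <> b ->
    exists (B : topologicalType) (cB : O0 -> B) (uB : O1 -> B -> B) (f : A -> B),
      fin_alg cB uB /\ continuous f /\ alg_hom c u cB uB f /\ f a <> f b.

Definition free_profinite_alg (O0 O1 X F : topologicalType)
  (c : O0 -> F) (u : O1 -> F -> F) (iota : X -> F) : Prop :=
  profinite_alg c u /\ continuous iota /\
  closure (alg_gen c u (range iota)) = [set: F] /\
  forall (B : topologicalType) (cB : O0 -> B) (uB : O1 -> B -> B) (phi : X -> B),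
    fin_alg cB uB -> continuous phi ->
    exists! psi : F -> B, continuous psi /\ alg_hom c u cB uB psi /\ psi \o iota = phi.

Definition monoid_ax (M : Type) (mul : M -> M -> M) (one : M) : Prop :=
  (forall x y z, mul x (mul y z) = mul (mul x y) z) /\
  (forall x, mul one x = x) /\ (forall x, mul x one = x).

Definition top_monoid (M : topologicalType) (mul : M -> M -> M) (one : M) : Prop :=
  monoid_ax mul one /\ continuous (fun p : M * M => mul p.1 p.2).

Definition fin_monoid (B : topologicalType) (mul : B -> B -> B) (one : B) : Prop :=
  finite_set [set: B] /\ discrete_top B /\ top_monoid mul one.

Definition monoid_hom (M N : Type) (mulM : M -> M -> M) (oneM : M)
  (mulN : N -> N -> N) (oneN : N) (f : M -> N) : Prop :=
  f oneM = oneN /\ (forall x y, f (mulM x y) = mulN (f x) (f y)).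

Definition submonoid_gen (M : Type) (mul : M -> M -> M) (one : M) (G : set M) : set M :=
  fun a => forall S : set M, G `<=` S -> S one ->
    (forall x y, S x -> S y -> S (mul x y)) -> S a.

Definition profinite_monoid (M : topologicalType) (mul : M -> M -> M) (one : M) : Prop :=
  top_monoid mul one /\ compact [set: M] /\
  forall a b : M, a <> b ->
    exists (B : topologicalType) (mulB : B -> B -> B) (oneB : B) (f : M -> B),
      fin_monoid mulB oneB /\ continuous f /\ monoid_hom mul one mulB oneB f /\ f a <> f b.

(* (M, mul, one, eta) is a free profinite monoid over the topological disjoint
   union X u O0 u O1; the continuous map eta from the disjoint union is given
   by its three (continuous) restrictions etaX, eta0, eta1. *)
Definition free_profinite_monoid (O0 O1 X M : topologicalType)
  (mul : M -> M -> M) (one : M) (etaX : X -> M) (eta0 : O0 -> M) (eta1 : O1 -> M) : Prop :=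
  profinite_monoid mul one /\
  continuous etaX /\ continuous eta0 /\ continuous eta1 /\
  closure (submonoid_gen mul one (range etaX `|` range eta0 `|` range eta1)) = [set: M] /\
  forall (B : topologicalType) (mulB : B -> B -> B) (oneB : B)
         (fX : X -> B) (f0 : O0 -> B) (f1 : O1 -> B),
    fin_monoid mulB oneB -> continuous fX -> continuous f0 -> continuous f1 ->
    exists! psi : M -> B, continuous psi /\ monoid_hom mul one mulB oneB psi /\
      psi \o etaX = fX /\ psi \o eta0 = f0 /\ psi \o eta1 = f1.

Definition monoid_E0 (O0 M : Type) (eta0 : O0 -> M) : O0 -> M := eta0.
Definition monoid_E1 (O1 M : Type) (mul : M -> M -> M) (eta1 : O1 -> M) : O1 -> M -> M :=
  fun w x => mul (eta1 w) x.

Definition S_M (O0 O1 X M : topologicalType) (mul : M -> M -> M)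
  (etaX : X -> M) (eta0 : O0 -> M) (eta1 : O1 -> M) : set M :=
  closed_alg_gen (monoid_E0 eta0) (monoid_E1 mul eta1) (range etaX).

Definition homeomorphism_onto (A B : topologicalType) (f : A -> B) (S : set B) : Prop :=
  continuous f /\ {in [set: A] &, injective f} /\ f @` [set: A] = S /\
  forall U : set A, open U -> exists V : set B, open V /\ f @` U = V `&` S.

(* Main.v *)
Require Import Defs.
From mathcomp Require Import all_boot all_order all_algebra.
From mathcomp Require Import all_classical all_reals all_analysis.
Local Open Scope classical_set_scope.

Lemma disc_cont (T U : topologicalType) (f : T -> U) :
  discrete_top T -> continuous f.
Proof. by move=> dT; apply/continuousP => A _; apply: dT. Qed.

Lemma slice_cont (O B : topologicalType) (g : O -> B -> B) (b : B) :
  discrete_top B -> continuous (fun p : O * B => g p.1 p.2) ->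
  forall w0, nbhs w0 [set w | g w b = g w0 b].
Proof.
move=> dB gc w0.
have : nbhs (g w0 b) [set g w0 b] by apply: open_nbhs_nbhs; split => //; apply: dB.
move=> /(gc (w0, b)) [[P Q] /= [HP HQ] sPQ].
apply: filterS HP => w Pw; apply: (sPQ (w, b)); split => //.
exact: nbhs_singleton.
Qed.

Lemma eq_closed (T N : topologicalType) (g1 g2 : T -> N) :
  discrete_top N -> continuous g1 -> continuous g2 ->
  closed [set z | g1 z = g2 z].
Proof.
move=> dN c1 c2; rewrite -[X in closed X]setCK closedC openE => z nz.
rewrite /interior.
have n1 : nbhs z [set w | g1 w = g1 z].
  apply: (c1 z [set g1 z]); apply: open_nbhs_nbhs; split => //; apply: dN.
have n2 : nbhs z [set w | g2 w = g2 z].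
  apply: (c2 z [set g2 z]); apply: open_nbhs_nbhs; split => //; apply: dN.
apply: filterS (filterI n1 n2) => w [/= -> ->]; exact: nz.
Qed.

Lemma haus_sep (M : topologicalType) :
  (forall a b : M, a <> b ->
    exists (B : topologicalType) (f : M -> B),
      discrete_top B /\ continuous f /\ f a <> f b) -> hausdorff_space M.
Proof.
move=> H; rewrite open_hausdorff => x y /eqP nxy.
have [B [f [dB [fc fxy]]]] := H _ _ nxy.
exists (f @^-1` [set f x], f @^-1` [set f y]) => /=.
  by split; rewrite inE.
split.
- by move: fc => /continuousP; apply; apply: dB.
- by move: fc => /continuousP; apply; apply: dB.
- by apply/eqP; rewrite -subset0 => z [/= -> ]. 
Qed.

Lemma sep_lemma
  (O0 O1 X : topologicalType)
  (F : topologicalType) (c : O0 -> F) (u : O1 -> F -> F) (iota : X -> F)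
  (M : topologicalType) (mul : M -> M -> M) (one : M)
  (etaX : X -> M) (eta0 : O0 -> M) (eta1 : O1 -> M)
  (Phi : F -> M) :
  closure (alg_gen c u (range iota)) = [set: F] ->
  free_profinite_monoid mul one etaX eta0 eta1 ->
  continuous Phi ->
  alg_hom c u (monoid_E0 eta0) (monoid_E1 mul eta1) Phi ->
  Phi \o iota = etaX -> continuous iota ->
  forall (B : topologicalType) (cB : O0 -> B) (uB : O1 -> B -> B) (f : F -> B),
  fin_alg cB uB -> continuous f -> alg_hom c u cB uB f ->
  forall a b, f a <> f b -> Phi a <> Phi b.
Proof.
move=> clF [_ [_ [_ [_ [_ univ]]]]] Phic [Phi0 Phi1] PhiX iotac B cB uB f
  [finB [dB [cBc uBc]]] fc [f0 f1] a b fab.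
have [s Hs] : exists s : seq B, [set: B] = [set` s] by apply/finite_seqP.
pose k := size s.
pose N := discrete_topology {ffun 'I_k.+1 -> 'I_k.+1}.
pose e (x : B) : 'I_k.+1 := inord (index x s).
pose e' (i : 'I_k.+1) : B := nth (f a) s i.
have eK x : e' (e x) = x.
  have xs : x \in s by have : [set` s] x by rewrite -Hs.
  by rewrite /e' /e inordK ?nth_index // ltnS index_size.
pose mulN (g h : N) : N := [ffun i => g (h i)].
pose oneN : N := [ffun i => i].
pose cst (x : B) : N := [ffun => e x].
pose g1 (w : O1) : N := [ffun i => e (uB w (e' i))].
have fmN : fin_monoid mulN oneN.
  split; first exact: (@finite_finset {ffun 'I_k.+1 -> 'I_k.+1} setT).
  split; first by move=> U; apply: discrete_open.
  split.
    split; first by move=> x y z; apply/ffunP => i; rewrite !ffunE.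
    by split => x; apply/ffunP => i; rewrite !ffunE.
  move=> [g h] A /= HA.
  exists ([set g], [set h]); first by split; apply: discrete_set1.
  by move=> [x y] [/= -> ->]; apply: nbhs_singleton.
have cstc : continuous cst by apply: disc_cont.
have g1c : continuous g1.
  move=> w0 A /= /nbhs_singleton HA.
  have : \forall w \near w0, forall i : 'I_k.+1, uB w (e' i) = uB w0 (e' i).
    apply: filter_forall => i; exact: slice_cont.
  apply: filterS => w Hw /=.
  suff -> : g1 w = g1 w0 by [].
  by apply/ffunP => i; rewrite !ffunE Hw.
have [psi [[psic [[psi1 psim] [pX [p0 p1]]]] _]] :=
  univ N mulN oneN (cst \o (f \o iota)) (cst \o cB) g1 fmN
    (fun x => continuous_comp (continuous_comp (iotac x) (fc _)) (cstc _))
    (fun x => continuous_comp (cBc x) (cstc _)) g1c.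
pose E := [set z | psi (Phi z) = cst (f z)].
have clE : closed E.
  apply: eq_closed; first by move=> U; apply: discrete_open.
    by move=> z; apply: continuous_comp (Phic z) (psic _).
  by move=> z; apply: continuous_comp (fc z) (cstc _).
have genE : alg_gen c u (range iota) `<=` E.
  move=> z; apply.
  - move=> _ [x _ <-]; rewrite /E /=.
    have -> : Phi (iota x) = etaX x by rewrite -PhiX.
    by have := congr1 (fun h => h x) pX.
  - split.
    + move=> w; rewrite /E /= Phi0 /monoid_E0.
      have -> : psi (eta0 w) = cst (cB w) by have := congr1 (fun h => h w) p0.
      by rewrite f0.
    + move=> w z0 Ez0; rewrite /E /= Phi1 /monoid_E1 psim Ez0 f1.
      have -> : psi (eta1 w) = g1 w by have := congr1 (fun h => h w) p1.
      by apply/ffunP => i; rewrite !ffunE eK.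
have allE : forall z, E z.
  move=> z; move/closure_id: clE => clE.
  rewrite clE; apply: (closureS genE); by rewrite clF.
move=> Pab; apply: fab.
have := allE a; have := allE b; rewrite /E /= Pab => -> /(congr1 (fun h : N => h ord0)).
by rewrite !ffunE => /(congr1 e'); rewrite !eK.
Qed.

Theorem theorem4p15
  (O0 O1 X : topologicalType)
  (F : topologicalType) (c : O0 -> F) (u : O1 -> F -> F) (iota : X -> F)
  (M : topologicalType) (mul : M -> M -> M) (one : M)
  (etaX : X -> M) (eta0 : O0 -> M) (eta1 : O1 -> M)
  (Phi : F -> M) :
  free_profinite_alg c u iota ->
  free_profinite_monoid mul one etaX eta0 eta1 ->
  (* Phi is the Polish representation Phi_X: the (unique) continuous
     Omega-homomorphism F -> S_M with Phi \o iota = eta|_X *)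
  continuous Phi ->
  (forall x, S_M mul etaX eta0 eta1 (Phi x)) ->
  alg_hom c u (monoid_E0 eta0) (monoid_E1 mul eta1) Phi ->
  Phi \o iota = etaX ->
  (* Phi is an isomorphism of topological algebras onto S_M *)
  homeomorphism_onto Phi (S_M mul etaX eta0 eta1).
Proof.
move=> hF hM Phic PhiS Phih PhiX.
have [[_ [cptF sepF]] [iotac [clF _]]] := hF.
have hM' := hM; move: hM' => [[_ [_ sepM]] _].
have hausM : hausdorff_space M.
  apply: haus_sep => x y /sepM [B [mulB [oneB [f [[_ [dB _]] [fc [_ fxy]]]]]]].
  by exists B, f.
have inj : {in [set: F] &, injective Phi}.
  move=> a b _ _ Pab; apply: contrapT => nab.
  have [B [cB [uB [f [fa [fc [fh fab]]]]]]] := sepF a b nab.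
  exact: (@sep_lemma _ _ _ _ _ _ _ _ _ _ _ _ _ _ clF hM Phic Phih PhiX iotac _ _ _ _ fa fc fh _ _ fab Pab).
have cimg : forall A, closed A -> closed (Phi @` A).
  move=> A clA; apply: compact_closed => //.
  apply: continuous_compact; first exact: continuous_subspaceT.
  exact: subclosed_compact clA cptF _.
have img : Phi @` [set: F] = S_M mul etaX eta0 eta1.
  apply/seteqP; split; first by move=> _ [x _ <-].
  move=> z; apply.
  - move=> _ [x _ <-]; exists (iota x) => //; by rewrite -PhiX.
  - move: Phih => [Ph0 Ph1]; split.
    + by move=> w; exists (c w) => //; rewrite Ph0.
    + by move=> w _ [x _ <-]; exists (u w x) => //; rewrite Ph1.
  - exact: cimg.
split => //; split => //; split => // U oU.
exists (~` (Phi @` (~` U))); split.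
  by rewrite openC; apply: cimg; rewrite closedC.
rewrite -img; apply/seteqP; split.
  move=> _ [x Ux <-]; split; last by exists x.
  by move=> [y nUy /(inj _ _ (in_setT _) (in_setT _)) eyx]; apply: nUy; rewrite eyx.
move=> z [nI [x _ ex]]; rewrite -ex in nI *; case: (pselect (U x)) => Ux; first by exists x.
by exfalso; apply: nI; exists x.
Qed.
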